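(* Let $n>2$ be an integer, $a,c\in\mathbb{R}$ and $b\in\mathbb{R}$ with $b\neq0$. Let $M=m_n(a,b,c)$ be the $(n+1)\times(n+1)$ real symmetric matrix with rows and columns indexed $0,1,\dots,n$, whose $(0,0)$-entry is $-nc$, whose $(0,j)$- and $(j,0)$-entries equal $b$ for $j=1,\dots,n$, and whose lower-right $n\times n$ block (indices $1,\dots,n$) is the circulant matrix $\mathrm{circ}(c,a,0,\dots,0,a)$, i.e. its $(j,j)$-entry is $c$, its $(j,j')$-entry is $a$ when $j'\equiv j\pm1 \pmod n$, and all other entries are $0$. Put $\varphi=2\pi/n$, $\omega=e^{\mathrm{i}\varphi}$, \[\Delta=\bigl(2a+(n+1)c\bigr)^2+4nb^2,\qquad \beta_\pm=-\frac{2a+(n+1)c\mp\sqrt{\Delta}}{2b},\] \[\lambda_\pm=b\beta_\pm+2a+c=\tfrac12\bigl(2a-(n-1)c\pm\sqrt\Delta\bigr),\qquad \lambda_k=c+2a\cos(k\varphi)\ (k=1,\dots,n-1).\] Let $\bm w_\pm=[\beta_\pm,1,1,\dots,1]^{\mathsf T}\in\mathbb{R}^{n+1}$ and $\bm w_k=[0,1,\omega^k,\omega^{2k},\dots,\omega^{(n-1)k}]^{\mathsf T}\in\mathbb{C}^{n+1}$ for $k=1,\dots,n-1$. Then $(\lambda_-,\bm w_-)$, $(\lambda_+,\bm w_+)$ and $(\lambda_k,\bm w_k)$, $k=1,\dots,n-1$, are the eigenpairs of $M$: $M\bm w_\pm=\lambda_\pm\bm w_\pm$, $M\bm w_k=\lambda_k\bm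 w_k$, and the $n+1$ vectors $\bm w_-,\bm w_+,\bm w_1,\dots,\bm w_{n-1}$ are linearly independent. *)

(* Defs.v *)
From mathcomp Require Import all_boot all_order all_algebra.
From mathcomp Require Import all_classical all_reals.
From mathcomp Require Import trigo.
From mathcomp.real_closed Require Import complex.
Set Implicit Arguments. Unset Strict Implicit. Unset Printing Implicit Defensive.
Import GRing.Theory Num.Theory.
Local Open Scope ring_scope.
Local Open Scope complex_scope.

Section Defs.
Variable R : realType.
Variable n : nat.
Variables a b c : R.

Definition mn : 'M[R]_(n.+1) :=
  \matrix_(i, j)
    if (i == 0 :> nat) && (j == 0 :> nat) then - (n%:R * c)
    else if (i == 0 :> nat) || (j == 0 :> nat) then b
    else if i == j :> nat then c
    else if ((i.+1 %% n)%N == (j %% n)%N) || ((j.+1 %% n)%N == (i %% n)%N)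
         then a else 0.

Definition phi : R := 2 * pi / n%:R.

Definition omega : R[i] := cos phi +i* sin phi.

Definition Delta : R := (2 * a + n.+1%:R * c) ^+ 2 + 4 * n%:R * b ^+ 2.

Definition beta_plus : R := - (2 * a + n.+1%:R * c - Num.sqrt Delta) / (2 * b).
Definition beta_minus : R := - (2 * a + n.+1%:R * c + Num.sqrt Delta) / (2 * b).

Definition lambda_plus : R := b * beta_plus + 2 * a + c.
Definition lambda_minus : R := b * beta_minus + 2 * a + c.

Definition lambda_k (k : nat) : R := c + 2 * a * cos (k%:R * phi).

Definition w_plus : 'cV[R]_(n.+1) :=
  \col_i (if (i == 0 :> nat) then beta_plus else 1).
Definition w_minus : 'cV[R]_(n.+1) :=
  \col_i (if (i == 0 :> nat) then beta_minus else 1).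

Definition w_k (k : nat) : 'cV[R[i]]_(n.+1) :=
  \col_i (if (i == 0 :> nat) then 0 else omega ^+ ((i.-1) * k)).

Definition cplx {m p : nat} (A : 'M[R]_(m, p)) : 'M[R[i]]_(m, p) :=
  map_mx (fun x : R => x%:C) A.

End Defs.

(* Main.v *)
Require Import Defs.
From mathcomp Require Import all_boot all_order all_algebra.
From mathcomp Require Import all_classical all_reals.
From mathcomp Require Import trigo.
From mathcomp.real_closed Require Import complex.
From mathcomp Require Import zify ring lra.
Import Order.TTheory GRing.Theory Num.Theory.
Local Open Scope ring_scope.
Local Open Scope complex_scope.

Lemma modn_lt2 (x n : nat) : (x < n + n)%N -> (x %% n = if (x < n)%N then x else x - n)%N.
Proof.
move=> h2; case: (ltnP x n) => h1; first by rewrite modn_small.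
have -> : x = (x - n + n)%N by rewrite subnK.
rewrite modnDr modn_small; first by rewrite addnK.
lia.
Qed.
Lemma E1 (n i j : nat) : (2 < n)%N -> (i < n)%N -> (j < n)%N -> (i.+2 %% n == j.+1 %% n)%N = (j == (i.+1 %% n)%N).
Proof.
move=> hn hi hj.
  rewrite !modn_lt2; try lia.
  case: (ltnP i.+2 n); case: (ltnP j.+1 n); case: (ltnP i.+1 n) => *; apply/idP/idP => /eqP H; apply/eqP; lia.
Qed.
Lemma E2 (n i j : nat) : (2 < n)%N -> (i < n)%N -> (j < n)%N -> (j.+2 %% n == i.+1 %% n)%N = (j == ((i + n.-1) %% n)%N).
Proof.
move=> hn hi hj.
  rewrite !modn_lt2; try lia.
  case: (ltnP j.+2 n); case: (ltnP i.+1 n); case: (ltnP (i + n.-1) n) => *; apply/idP/idP => /eqP H; apply/eqP; lia.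
Qed.
Lemma F1 (n i : nat) : (2 < n)%N -> (i < n)%N -> ((i.+1 %% n)%N == i) = false.
Proof. move=> hn hi; rewrite !modn_lt2; try lia. case: (ltnP i.+1 n) => ?; apply/negbTE/eqP; lia. Qed.
Lemma F2 (n i : nat) : (2 < n)%N -> (i < n)%N -> (((i + n.-1) %% n)%N == i) = false.
Proof. move=> hn hi; rewrite !modn_lt2; try lia. case: (ltnP (i + n.-1) n) => ?; apply/negbTE/eqP; lia. Qed.
Lemma F3 (n i : nat) : (2 < n)%N -> (i < n)%N -> (((i + n.-1) %% n)%N == (i.+1 %% n)%N) = false.
Proof. move=> hn hi; rewrite !modn_lt2; try lia. case: (ltnP i.+1 n); case: (ltnP (i + n.-1) n) => *; apply/negbTE/eqP; lia. Qed.

Lemma sum_ind (T : pzRingType) (n x : nat) (k : T) (f : nat -> T) : (x < n)%N ->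
  \sum_(j < n) (k * (j == x :> nat)%:R) * f j = k * f x.
Proof.
move=> hx; rewrite (bigD1 (Ordinal hx)) //= eqxx mulr1 big1 ?addr0 // => j hj.
have -> : (j == x :> nat) = false.
  apply/negbTE; apply: contra hj => /eqP h; apply/eqP/val_inj => //.
by rewrite mulr0 mul0r.
Qed.

Lemma mn_entry (R : realType) n (a b c : R) (i j : 'I_n) : (2 < n)%N ->
  mn n a b c (lift ord0 i) (lift ord0 j) =
  c * (j == i :> nat)%:R + a * (j == (i.+1 %% n)%N :> nat)%:R
    + a * (j == ((i + n.-1) %% n)%N :> nat)%:R.
Proof.
move=> hn; rewrite mxE !lift0 /=.
have hi := ltn_ord i; have hj := ltn_ord j.
rewrite eqSS (E1 _ _ _ hn hi hj) (E2 _ _ _ hn hi hj) [X in if X then _ else _]eq_sym.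
have f1 := F1 _ _ hn hi; have f2 := F2 _ _ hn hi; have f3 := F3 _ _ hn hi.
case: (eqVneq (j : nat) i) => [->|ne].
  by rewrite !(eq_sym (nat_of_ord i)) f1 f2 /=; ring.
case: (eqVneq (j : nat) (i.+1 %% n)%N) => [->|ne1]; first by rewrite (eq_sym (i.+1 %% n)%N) f3 /=; ring.
case: (eqVneq (j : nat) ((i + n.-1) %% n)%N) => [_|ne2] /=; ring.
Qed.

Definition ee {R : realType} (x : R) : R[i] := cos x +i* sin x.

Lemma eeD (R : realType) (x y : R) : ee x * ee y = ee (x + y).
Proof. rewrite /ee cosD sinD. simpc. congr (_ +i* _); ring. Qed.

Lemma ee0 (R : realType) : ee (0 : R) = 1.
Proof. by rewrite /ee cos0 sin0. Qed.

Lemma omegaX (R : realType) n m : omega R n ^+ m = ee (m%:R * phi R n).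
Proof.
elim: m => [|m IH]; first by rewrite expr0 mul0r ee0.
by rewrite exprS IH /omega -/(ee _) eeD -addn1 natrD mulrDl mul1r addrC.
Qed.

Lemma omega_n (R : realType) n : (0 < n)%N -> omega R n ^+ n = 1.
Proof.
move=> hn; rewrite omegaX /phi.
have -> : n%:R * (2 * pi / n%:R) = pi *+ 2 :> R.
  by rewrite mulrC divfK ?pnatr_eq0 -?lt0n // mulr_natl.
by rewrite /ee cos2pi sin2pi.
Qed.

Lemma omega_mod (R : realType) n m : (0 < n)%N -> omega R n ^+ m = omega R n ^+ (m %% n).
Proof.
move=> hn; rewrite {1}(divn_eq m n) exprD exprM exprAC.
by rewrite omega_n // expr1n mul1r.
Qed.

Lemma cos_lt1 (R : realType) (x : R) : 0 < x < pi *+ 2 -> cos x < 1.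
Proof.
move=> /andP[h0 h1].
have -> : x = (x / 2) *+ 2 by rewrite -mulr_natr divfK ?pnatr_eq0.
rewrite cos_mulr2n cos2sin2.
have : 0 < sin (x / 2).
  apply: sin_gt0_pi; apply/andP; split; first by rewrite divr_gt0.
  by rewrite ltr_pdivrMr // mulr_natr.
move=> hs.
have : 0 < sin (x / 2) ^+ 2 by rewrite exprn_gt0.
rewrite -mulr_natr; lra.
Qed.

Lemma omega_neq1 (R : realType) n r : (0 < r < n)%N -> omega R n ^+ r != 1.
Proof.
move=> /andP[h0 h1]; rewrite omegaX /ee /phi.
apply/eqP => /(congr1 (@complex.Re R)) /= hc.
have : cos (r%:R * (2 * pi / n%:R)) < 1 :> R.
  apply: cos_lt1; apply/andP; split.
    apply: mulr_gt0; first by rewrite ltr0n.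
    by apply: divr_gt0; [apply: mulr_gt0 => //; exact: pi_gt0 | rewrite ltr0n; lia].
  have hn : (0 : R) < n%:R by rewrite ltr0n; lia.
  have e : r%:R * (2 * pi / n%:R) = (pi *+ 2) * (r%:R / n%:R) :> R.
    rewrite -mulr_natl; field; rewrite pnatr_eq0; lia.
  have hp : (0 : R) < pi *+ 2 by rewrite -mulr_natl mulr_gt0 ?pi_gt0.
  by rewrite e gtr_pMr // ltr_pdivrMr // mul1r ltr_nat.
by rewrite hc; lra.
Qed.

Lemma geo (R : realType) n x : (0 < n)%N ->
  \sum_(j < n) omega R n ^+ (j * x) = if (n %| x)%N then n%:R else 0.
Proof.
move=> hn.
under eq_bigr do rewrite mulnC exprM.
case: ifP => hd.
  rewrite omega_mod // (eqP hd) expr0.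
  under eq_bigr do rewrite expr1n.
  by rewrite sumr_const card_ord.
set z := omega R n ^+ x.
have hz : z != 1.
  rewrite /z omega_mod //; apply: omega_neq1.
  rewrite ltn_mod hn andbT lt0n; exact: negbT.
have hzn : z ^+ n = 1 by rewrite /z exprAC omega_n // expr1n.
have := subrX1 z n; rewrite hzn subrr => /esym /eqP.
rewrite mulf_eq0 subr_eq0 (negbTE hz) /= => /eqP //.
Qed.

Lemma omega_pair (R : realType) n k : (0 < n)%N ->
  omega R n ^+ k + omega R n ^+ (n.-1 * k) = (2 * cos (k%:R * phi R n))%:C.
Proof.
move=> hn.
have h : omega R n ^+ (n.-1 * k) * omega R n ^+ k = 1.
  rewrite -exprD -{2}(mul1n k) -mulnDl addn1 prednK // exprM omega_n //.
  by rewrite expr1n.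
have -> : omega R n ^+ (n.-1 * k) = ee (- (k%:R * phi R n)).
  rewrite -[LHS]mulr1 -(ee0 R) -(subrr (k%:R * phi R n)) -eeD mulrA -omegaX h.
  by rewrite mul1r.
rewrite omegaX /ee cosN sinN; simpc; congr (_ +i* _); ring.
Qed.

Lemma sum_ind1 (T : pzRingType) (n x : nat) (k : T) : (x < n)%N ->
  \sum_(j < n) (k * (j == x :> nat)%:R) = k.
Proof.
move=> hx; have := @sum_ind T n x k (fun _ => 1) hx.
under eq_bigr do rewrite mulr1. by rewrite mulr1.
Qed.

Lemma omega_modl (R : realType) n x k : (0 < n)%N ->
  omega R n ^+ ((x %% n) * k) = omega R n ^+ (x * k).
Proof. by move=> hn; rewrite omega_mod // modnMml -omega_mod. Qed.

Lemma dvd_shift n m t : (m < n)%N -> (t < n)%N -> (n %| m + (n - t))%N = (m == t).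
Proof.
move=> hm ht; rewrite /dvdn modn_lt2; last lia.
case: (ltnP (m + (n - t)) n) => h; apply/idP/idP => /eqP H; apply/eqP; lia.
Qed.

Lemma quad (R : realType) n (a b c : R) (hb : b != 0) (s : R) :
  s ^+ 2 = Delta n a b c ->
  (forall beta, beta = - (2 * a + n.+1%:R * c - s) / (2 * b) ->
   - (n%:R * c) * beta + b *+ n = (b * beta + 2 * a + c) * beta).
Proof.
move=> hs beta ->.
have key : b * (- (2 * a + n.+1%:R * c - s) / (2 * b)) ^+ 2
   + (2 * a + n.+1%:R * c) * (- (2 * a + n.+1%:R * c - s) / (2 * b)) - b *+ n
   = (s ^+ 2 - Delta n a b c) / (4 * b).
  rewrite /Delta -mulr_natr; field; exact: hb.
move: key; rewrite hs subrr mul0r.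
set B := (- (2 * a + n.+1%:R * c - s) / (2 * b)).
rewrite -mulr_natr -addn1 natrD. move=> key. nra.
Qed.

Theorem theorem4 (R : realType) (n : nat) (hn : (2 < n)%N) (a b c : R)
    (hb : b != 0) :
  let M := mn n a b c in
  (* the two expressions for lambda_pm agree *)
  lambda_plus n a b c = (2 * a - n.-1%:R * c + Num.sqrt (Delta n a b c)) / 2 /\
  lambda_minus n a b c = (2 * a - n.-1%:R * c - Num.sqrt (Delta n a b c)) / 2 /\
  (* eigenpairs *)
  M *m w_plus n a b c = lambda_plus n a b c *: w_plus n a b c /\
  M *m w_minus n a b c = lambda_minus n a b c *: w_minus n a b c /\
  (forall k : nat, (1 <= k < n)%N ->
     cplx M *m w_k R n k = (lambda_k n a c k)%:C *: w_k R n k) /\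
  (* linear independence of w_-, w_+, w_1, ..., w_(n-1) over C *)
  (forall (am ap : R[i]) (g : nat -> R[i]),
     am *: cplx (w_minus n a b c) + ap *: cplx (w_plus n a b c)
       + \sum_(1 <= k < n) g k *: w_k R n k = 0 ->
     am = 0 /\ ap = 0 /\ forall k : nat, (1 <= k < n)%N -> g k = 0).
Proof.
move=> M; rewrite {}/M.
have hn0 : (0 < n)%N by lia.
have hN : n.+1%:R = n.-1%:R + 2 :> R.
  rewrite -natrD; congr (_%:R); lia.
set s := Num.sqrt (Delta n a b c).
have hD0 : 0 < Delta n a b c.
  rewrite /Delta; apply: ltr_wpDl; first exact: sqr_ge0.
  apply: mulr_gt0; first by rewrite mulr_gt0 // ltr0n.
  by rewrite lt_def sqr_ge0 andbT sqrf_eq0 hb.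
have hs : s ^+ 2 = Delta n a b c by rewrite sqr_sqrtr // ltW.
have hs0 : 0 < s by rewrite sqrtr_gt0.
have eig : forall beta, - (n%:R * c) * beta + b *+ n = (b * beta + 2 * a + c) * beta ->
   mn n a b c *m (\col_i (if (i == 0 :> nat) then beta else 1)) =
   (b * beta + 2 * a + c) *: (\col_i (if (i == 0 :> nat) then beta else 1)).
  move=> beta hq; apply/matrixP => i j.
  rewrite [in LHS]mxE [in RHS]mxE big_ord_recl /=.
  case: (unliftP ord0 i) => [i'|] -> /=.
    under eq_bigr => j' _ do rewrite (@mn_entry R n a b c i' j' hn) mxE lift0 /= mulr1.
    rewrite /mn !mxE !lift0 /=.
    rewrite !big_split /= !sum_ind1 ?ltn_mod // mulr1; ring.
  rewrite /mn !mxE /=.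
  under eq_bigr => j' _ do rewrite !mxE lift0 /= mulr1.
  by rewrite sumr_const card_ord.
have qp := @quad R n a b c hb s hs (beta_plus n a b c) (erefl _).
have qm : - (n%:R * c) * beta_minus n a b c + b *+ n =
    (b * beta_minus n a b c + 2 * a + c) * beta_minus n a b c.
  have hs' : (- s) ^+ 2 = Delta n a b c by rewrite sqrrN.
  apply: (@quad R n a b c hb (- s) hs'); by rewrite /beta_minus opprK.
split.
  rewrite /lambda_plus /beta_plus -/s hN; field; exact: hb.
split.
  rewrite /lambda_minus /beta_minus -/s hN; field; exact: hb.
split; first exact: eig.
split; first exact: eig.
split.
  move=> k /andP[hk1 hk2]; apply/matrixP => i j.
  rewrite [in LHS]mxE [in RHS]mxE big_ord_recl /=.
  case: (unliftP ord0 i) => [i'|] -> /=.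
    under eq_bigr => j' _ do rewrite /cplx [map_mx _ _ _ _]mxE (@mn_entry R n a b c i' j' hn) [w_k _ _ _ _ _]mxE lift0 /= !rmorphD !rmorphM !rmorph_nat.
    rewrite /cplx /mn !mxE !lift0 /=.
    under eq_bigr => j' _ do rewrite !mulrDl.
    rewrite !big_split /= !(@sum_ind _ n _ _ (fun j => omega R n ^+ (j * k))) ?ltn_mod //.
    rewrite !omega_modl // mulSn exprD mulnDl exprD.
    have hl : (lambda_k n a c k)%:C = c%:C + a%:C * (omega R n ^+ k + omega R n ^+ (n.-1 * k)).
      by rewrite omega_pair // /lambda_k !rmorphD !rmorphM; ring.
    rewrite hl; ring.
  rewrite /cplx /mn !mxE /=.
  under eq_bigr => j' _ do rewrite !mxE lift0 /=.
  rewrite -mulr_sumr geo // ifF ?mulr0 //.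
    by rewrite addr0.
  by apply/negbTE/negP => /(dvdn_leq hk1); lia.
move=> am ap g H.
have row : forall i : 'I_n.+1, (am *: cplx (w_minus n a b c) + ap *: cplx (w_plus n a b c)
       + \sum_(1 <= k < n) g k *: w_k R n k) i 0 = 0 by move=> i; rewrite H mxE.
have r0 : am * (beta_minus n a b c)%:C + ap * (beta_plus n a b c)%:C = 0.
  have := row ord0; rewrite !mxE summxE big1 ?addr0 // => k _.
  by rewrite !mxE /= mulr0.
have rj : forall j : 'I_n, am + ap + \sum_(1 <= k < n) g k * omega R n ^+ (j * k) = 0.
  move=> j; have := row (lift ord0 j); rewrite !mxE summxE lift0 /=.
  under eq_bigr do rewrite !mxE lift0 /=.
  by rewrite rmorph1 !mulr1.
pose G := fun m : nat => if m == 0%N then am + ap else g m.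
have HG : forall j : 'I_n, \sum_(m < n) G m * omega R n ^+ (j * m) = 0.
  move=> j; rewrite -(big_mkord xpredT (fun m => G m * omega R n ^+ (j * m))).
  rewrite big_ltn // muln0 expr0 mulr1 /G eqxx /= -[RHS](rj j); congr (_ + _).
  by apply: eq_big_nat => m /andP[hm _]; rewrite (gtn_eqF hm).
have Gt : forall t, (t < n)%N -> G t = 0.
  move=> t ht.
  have E : forall m : 'I_n, \sum_(j < n) omega R n ^+ (j * (n - t)) * (G m * omega R n ^+ (j * m))
      = G m * (if (m == t :> nat) then n%:R else 0).
    move=> m; rewrite -(@dvd_shift n m t (ltn_ord m) ht) -(@geo R n _ hn0) mulr_sumr; apply: eq_bigr => j _.
    by rewrite mulrCA -exprD -mulnDr addnC.
  have : \sum_(j < n) omega R n ^+ (j * (n - t)) * \sum_(m < n) G m * omega R n ^+ (j * m) = 0.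
    by rewrite big1 // => j _; rewrite HG mulr0.
  under eq_bigr do rewrite mulr_sumr.
  rewrite exchange_big /=.
  under eq_bigr do rewrite E.
  rewrite (bigD1 (Ordinal ht)) //= eqxx big1 ?addr0.
    by move/eqP; rewrite mulf_eq0 pnatr_eq0 (negbTE (lt0n_neq0 hn0)) orbF => /eqP.
  move=> m hm; rewrite ifF ?mulr0 //; apply/negbTE; apply: contra hm => /eqP h.
  by apply/eqP/val_inj.
have hap : ap = - am.
  by have := Gt 0%N hn0; rewrite /G eqxx => /eqP; rewrite addrC addr_eq0 => /eqP.
have hbd : (beta_minus n a b c - beta_plus n a b c)%:C != 0.
  rewrite fmorph_eq0.
  have -> : beta_minus n a b c - beta_plus n a b c = - (s / b).
    by rewrite /beta_minus /beta_plus -/s; field.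
  by rewrite oppr_eq0 mulf_eq0 invr_eq0 (negbTE hb) orbF gt_eqF.
have ham : am = 0.
  have : am * (beta_minus n a b c - beta_plus n a b c)%:C = 0.
    by rewrite rmorphB mulrBr -[RHS]r0 hap; ring.
  by move/eqP; rewrite mulf_eq0 (negbTE hbd) orbF => /eqP.
split; first exact: ham.
split; first by rewrite hap ham oppr0.
move=> k /andP[hk1 hk2]; have := Gt k hk2; rewrite /G ifF //.
by rewrite gtn_eqF.
Qed.
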